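(* In the setting described in the context, suppose $c^{l,n},c^{l,n+1}$ ($l=1,\dots,M$), $\psi^{n+1}$, $T^n,T^{n+1}$ satisfy Scheme I with $c^{l,n}_i,c^{l,n+1}_i,T^n_i,T^{n+1}_i>0$ for all $i,l$. Define the discrete entropy $S^m_h=-\sum_{l=1}^M(c^{l,m},\log c^{l,m})+(\log T^m+1,C_T)$ for $m=n,n+1$. Then \[ \frac{S^{n+1}_h-S^n_h}{\Delta t}\ \ge\ \varepsilon\sum_{l=1}^M\Big(\nu^lc^{l,n+1}|\hat{\mathbf u}^{l,n+1}|^2,\frac{1}{T^{n+1}}\Big)-k\sum_{\sigma\in\mathcal E_{int}}\tau_\sigma\,DT^{n+1}_{i,\sigma}\,D\Big(\frac1{T^{n+1}}\Big)_{i,\sigma}\ \ge 0, \] where in the last sum $\sigma=i|j$ with either orientation (the product is orientation-independent).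
   Context: Mesh. $\Omega\subset\mathbb R^d$ is a bounded polygonal/polyhedral domain with $\partial\Omega=\Gamma_D\cup\Gamma_N$, $\Gamma_D\cap\Gamma_N=\emptyset$. A Voronoi finite-volume mesh consists of points $\mathbf x_1,\dots,\mathbf x_N$ and control volumes $V_i=\{\mathbf y\in\Omega:|\mathbf y-\mathbf x_i|<|\mathbf y-\mathbf x_j|\ \forall j\ne i\}$. An interior face is $\sigma=\partial V_i\cap\partial V_j$ of positive $(d-1)$-measure, written $\sigma=i|j$; $\mathcal E_{int}$ is the set of interior faces and $\mathcal E_{i,int}$ those of $V_i$; $\mathcal E^D_{i,ext}$, $\mathcal E^N_{i,ext}$ are the faces of $\partial V_i$ lying in $\Gamma_D$, resp. $\Gamma_N$. $\mathrm m(\cdot)$ is Lebesgue measure (in dimension $d$ or $d-1$); $d_\sigma=|\mathbf x_i-\mathbf x_j|$ for $\sigma=i|j$ and $d_\sigma=\mathrm{dist}(\mathbf x_i,\sigma)$ for exterior faces of $V_i$; $\tau_\sigma=\mathrm m(\sigma)/d_\sigma$. Grid functions are vectors $u=(u_1,\dots,u_N)\in\mathbb R^N$; for $\sigma=i|j$, $Du_{i,\sigma}=u_j-u_i$. For positive $u$ and $\sigma=i|j$, $\mathcal A_\sigma u=\frac{(\mathrm m(V_i)+\mathrm m(V_j))u_iu_j}{\mathrm m(V_i)u_j+\mathrm m(V_j)u_i}$ (harmonic average). The discrete inner product is $(f,g)=\sum_{i=1}^N\mathrm m(V_i)f_ig_i$; products, quotients and logarithms of grid functions are taken componentwise. Scheme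 I. Parameters: $\varepsilon>0$, $k>0$, $C_T>0$, $\Delta t>0$, $\nu^l>0$, $z^l\in\mathbb R$ ($l=1,\dots,M$), a grid function $\rho^f$, Dirichlet data $\psi^D_\sigma$ on $\Gamma_D$-faces and Neumann data $g_\sigma$ on $\Gamma_N$-faces. Given $c^{l,n}$ (positive), $T^n$, the unknowns $c^{l,n+1}$ (positive), $\psi^{n+1}$, $T^{n+1}$ satisfy, for $i=1,\dots,N$: (i) $\frac{c^{l,n+1}_i-c^{l,n}_i}{\Delta t}+\frac{\varepsilon}{\mathrm m(V_i)}\sum_{\sigma\in\mathcal E_{i,int}}\mathrm m(\sigma)F^l_{i,\sigma}=0$, where for $\sigma=i|j$ \[F^l_{i,\sigma}=-\frac{1}{\nu^l d_\sigma}\Big[\mathcal A_\sigma(c^{l,n})\,D\big(\log c^{l,n+1}+z^l\psi^{n+1}\big)_{i,\sigma}+D\big(c^{l,n}(T^n-1)\big)_{i,\sigma}\Big]\] (so $F^l_{j,\sigma}=-F^l_{i,\sigma}$), and the flux through exterior faces is zero (zero-flux boundary condition); (ii) $-\frac{\varepsilon^2}{\mathrm m(V_i)}\Big[\sum_{\sigma\in\mathcal E_{i,int}}\tau_\sigma D\psi^{n+1}_{i,\sigma}+\sum_{\sigma\in\mathcal E^D_{i,ext}}\tau_\sigma(\psi^D_\sigma-\psi^{n+1}_i)\Big]-\frac{1}{\mathrm m(V_i)}\sum_{\sigma\in\mathcal E^N_{i,ext}}\mathrm m(\sigma)g_\sigma=\sum_{l=1}^Mz^lc^{l,n+1}_i+\rho^f_i$;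 (iii) $C_T\frac{T^{n+1}_i-T^n_i}{\Delta t}=\frac{k}{\mathrm m(V_i)}\sum_{\sigma\in\mathcal E_{i,int}}\tau_\sigma DT^{n+1}_{i,\sigma}+T^{n+1}_iP^{n+1}_i+\varepsilon\sum_{l=1}^M\nu^lc^{l,n+1}_i|\hat{\mathbf u}^{l,n+1}_i|^2$ (thermally insulated boundary: no exterior-face terms), where \[P^{n+1}_i=\sum_{l=1}^M\Big[\frac{\varepsilon}{\mathrm m(V_i)}\sum_{\sigma\in\mathcal E_{i,int}}\mathrm m(\sigma)F^l_{i,\sigma}\lambda^l_\sigma+(1+\log c^{l,n+1}_i)\frac{c^{l,n+1}_i-c^{l,n}_i}{\Delta t}\Big],\] $\lambda^l_\sigma$ is a face value of $\log c^{l,n+1}$ depending only on $\sigma$ (the same from both sides), and $\hat{\mathbf u}^{l,n+1}_i\in\mathbb R^d$ are given cell-wise velocity reconstructions computed from $c^{l,n+1},\psi^{n+1},T^n$; $|\hat{\mathbf u}^{l,n+1}|^2$ denotes the grid function $i\mapsto|\hat{\mathbf u}^{l,n+1}_i|^2$. *)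

(* Defs.v *)
From HB Require Import structures.
From mathcomp Require Import all_boot all_order all_algebra.
From mathcomp Require Import all_classical all_reals.
From mathcomp Require Import exp.
Import Order.TTheory GRing.Theory Num.Theory.
Local Open Scope ring_scope.

(* Cells are indexed by 'I_ncell.  Interior faces sigma = i|j are      *)
(* encoded by the symmetric, irreflexive adjacency relation [adj];    *)
(* an interior face is the unordered pair {i,j} with adj i j.         *)
(* Exterior faces are indexed by 'I_nxface, each belonging to one cell  *)
(* [xowner] and lying either on Gamma_D ([xdir] = true) or Gamma_N.   *)
Record mesh (R : realType) (d : nat) := Mesh {
  ncell : nat;
  pt    : 'I_ncell -> 'rV[R]_d;          (* Voronoi generators x_i     *)
  vol   : 'I_ncell -> R;
  adj   : 'I_ncell -> 'I_ncell -> bool;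
  fmeas : 'I_ncell -> 'I_ncell -> R;
  nxface  : nat;
  xowner : 'I_nxface -> 'I_ncell;
  xdir   : 'I_nxface -> bool;
  xmeas  : 'I_nxface -> R;
  xdist  : 'I_nxface -> R
}.
Arguments ncell {R d}. Arguments pt {R d}. Arguments vol {R d}.
Arguments adj {R d}. Arguments fmeas {R d}. Arguments nxface {R d}.
Arguments xowner {R d}. Arguments xdir {R d}. Arguments xmeas {R d}.
Arguments xdist {R d}.

Definition eucl (R : realType) (d : nat) (x y : 'rV[R]_d) : R :=
  Num.sqrt (\sum_(k < d) (x 0 k - y 0 k) ^+ 2).

Definition sqnorm (R : realType) (d : nat) (x : 'rV[R]_d) : R :=
  \sum_(k < d) (x 0 k) ^+ 2.

Arguments eucl {R d}. Arguments sqnorm {R d}.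

Section MeshDefs.
Variables (R : realType) (d : nat) (m : mesh R d).
Local Notation N := (ncell m).
Local Notation cell := 'I_(ncell m).
Local Notation grid := (cell -> R).

Definition mesh_ok : Prop :=
  injective (pt m)
  /\ (forall i, 0 < vol m i)
  /\ (forall i j, adj m i j = adj m j i)
  /\ (forall i, ~~ adj m i i)
  /\ (forall i j, fmeas m i j = fmeas m j i)
  /\ (forall i j, adj m i j -> 0 < fmeas m i j)
  /\ (forall s, 0 < xmeas m s)
  /\ (forall s, 0 < xdist m s).

Definition dint (i j : cell) : R := eucl (pt m i) (pt m j).
Definition tauint (i j : cell) : R := fmeas m i j / dint i j.
Definition tauext (s : 'I_(nxface m)) : R := xmeas m s / xdist m s.

Definition Dg (u : grid) (i j : cell) : R := u j - u i.

Definition harm (u : grid) (i j : cell) : R :=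
  (vol m i + vol m j) * u i * u j / (vol m i * u j + vol m j * u i).

Definition dinner (f g : grid) : R := \sum_(i < N) vol m i * f i * g i.

Definition lng (u : grid) : grid := fun i => ln (u i).

Definition entropy (M : nat) (CT : R) (c : 'I_M -> grid) (T : grid) : R :=
  - (\sum_(l < M) dinner (c l) (lng (c l)))
  + dinner (fun i => ln (T i) + 1) (fun _ => CT).

Definition flux (nu z : R) (cn cn1 : grid) (psi1 Tn : grid) (i j : cell) : R :=
  - (1 / (nu * dint i j)) *
    (harm cn i j * Dg (fun k => ln (cn1 k) + z * psi1 k) i j
     + Dg (fun k => cn k * (Tn k - 1)) i j).

End MeshDefs.

Arguments mesh_ok {R d}. Arguments dint {R d}. Arguments tauint {R d}.
Arguments tauext {R d}. Arguments Dg {R d}. Arguments harm {R d}.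
Arguments dinner {R d}. Arguments lng {R d}. Arguments entropy {R d} m {M}.
Arguments flux {R d}.

Definition schemeI {R : realType} {d : nat} (m : mesh R d) {M : nat}
  (eps k CT dt : R) (nu z : 'I_M -> R) (rhof : 'I_(ncell m) -> R)
  (psiD g : 'I_(nxface m) -> R)
  (lam : 'I_M -> 'I_(ncell m) -> 'I_(ncell m) -> R)
  (uhat : 'I_M -> 'I_(ncell m) -> 'rV[R]_d)
  (cn cn1 : 'I_M -> 'I_(ncell m) -> R) (psi1 Tn Tn1 : 'I_(ncell m) -> R) : Prop :=
  let F l i j := flux m (nu l) (z l) (cn l) (cn1 l) psi1 Tn i j in
  (* (i) mass balance, zero flux through exterior faces *)
  (forall (l : 'I_M) (i : 'I_(ncell m)),
     (cn1 l i - cn l i) / dt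
     + eps / vol m i * (\sum_(j < ncell m | adj m i j) fmeas m i j * F l i j) = 0)
  /\ (forall i : 'I_(ncell m),
     - (eps ^+ 2 / vol m i) *
        ((\sum_(j < ncell m | adj m i j) tauint m i j * Dg m psi1 i j)
         + \sum_(s < nxface m | (xowner m s == i) && xdir m s)
              tauext m s * (psiD s - psi1 i))
     - 1 / vol m i * (\sum_(s < nxface m | (xowner m s == i) && ~~ xdir m s)
              xmeas m s * g s)
     = \sum_(l < M) z l * cn1 l i + rhof i)
  (* (iii) temperature equation, thermally insulated boundary *)
  /\ (forall i : 'I_(ncell m),
     let P := \sum_(l < M)
        (eps / vol m i * (\sum_(j < ncell m | adj m i j)
                             fmeas m i j * F l i j * lam l i j)
         + (1 + ln (cn1 l i)) * ((cn1 l i - cn l i) / dt)) in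
     CT * ((Tn1 i - Tn i) / dt)
     = k / vol m i * (\sum_(j < ncell m | adj m i j) tauint m i j * Dg m Tn1 i j)
       + Tn1 i * P
       + eps * \sum_(l < M) nu l * cn1 l i * sqnorm (uhat l i)).

(* Main.v *)
Require Import Defs.
From HB Require Import structures.
From mathcomp Require Import all_boot all_order all_algebra.
From mathcomp Require Import all_classical all_reals.
From mathcomp Require Import exp ring lra.
Import Order.TTheory GRing.Theory Num.Theory.
Local Open Scope ring_scope.

Set Implicit Arguments. Unset Strict Implicit.


Lemma ln_le_sub1 (R : realType) (u : R) : 0 < u -> ln u <= u - 1.
Proof.
move=> hu. have := expR_ge1Dx (ln u). rewrite lnK ?posrE //. lra.
Qed.

Lemma ln_diff (R : realType) (x y : R) : 0 < x -> 0 < y -> (y - x) / y <= ln y - ln x.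
Proof.
move=> hx hy.
have h := ln_le_sub1 (divr_gt0 hx hy).
rewrite ln_div ?posrE // in h.
have -> : (y - x) / y = 1 - x / y by field; rewrite gt_eqF.
lra.
Qed.

Lemma sym_sum (R : realType) n (a : 'I_n -> 'I_n -> bool) (h : 'I_n -> 'I_n -> R) :
  (forall i j, a i j = a j i) -> (forall i, ~~ a i i) ->
  \sum_(i < n) \sum_(j < n | a i j) h i j
  = \sum_(i < n) \sum_(j < n | (i < j)%N && a i j) (h i j + h j i).
Proof.
move=> asym airr.
under eq_bigr => i _ do rewrite (bigID (fun j : 'I_n => (i < j)%N)) /=.
rewrite big_split /=.
under [RHS]eq_bigr => i _ do rewrite big_split /=.
rewrite [RHS]big_split /=.
congr (_ + _).
  by apply: eq_bigr => i _; apply: eq_bigl => j; rewrite andbC.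
under eq_bigr => i _ do rewrite big_mkcond /=.
rewrite exchange_big /=.
apply: eq_bigr => i _; rewrite [RHS]big_mkcond /=.
apply: eq_bigr => j _.
rewrite (asym j i).
case: (ltngtP i j) => hij.
- by rewrite /= andbT.
- by rewrite /= andbF.
- have e : j = i by apply: val_inj.
  by rewrite e (negbTE (airr i)).
Qed.

Lemma ln_diff' (R : realType) (x y : R) : 0 < x -> 0 < y -> y - x <= y * (ln y - ln x).
Proof.
move=> hx hy. have h := ln_diff hx hy.
have -> : y - x = y * ((y - x) / y) by field; rewrite gt_eqF.
by rewrite ler_wpM2l // ltW.
Qed.

Section Sym.
Variables (R : realType) (d : nat) (m : mesh R d).

Lemma dintC i j : dint m i j = dint m j i.
Proof.
rewrite /dint /eucl; congr Num.sqrt; apply: eq_bigr => q _.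
by rewrite -sqrrN opprB.
Qed.

Lemma harmC (u : 'I_(ncell m) -> R) i j : harm m u i j = harm m u j i.
Proof. rewrite /harm; congr (_ / _); ring. Qed.

Lemma fluxC nu z cn cn1 psi1 Tn i j :
  flux m nu z cn cn1 psi1 Tn j i = - flux m nu z cn cn1 psi1 Tn i j.
Proof.
rewrite /flux /Dg (dintC j i) (harmC _ j i).
set a := harm _ _ _ _; set b := 1 / _. ring.
Qed.
End Sym.

Ltac nz := do ?split; repeat (apply/andP; split); (apply: lt0r_neq0; by []).
Unset Implicit Arguments.
Theorem theorem3p3 (R : realType) (d : nat) (m : mesh R d) (M : nat)
  (eps k CT dt : R) (nu z : 'I_M -> R) (rhof : 'I_(ncell m) -> R)
  (psiD g : 'I_(nxface m) -> R)
  (lam : 'I_M -> 'I_(ncell m) -> 'I_(ncell m) -> R)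
  (uhat : 'I_M -> 'I_(ncell m) -> 'rV[R]_d)
  (cn cn1 : 'I_M -> 'I_(ncell m) -> R) (psi1 Tn Tn1 : 'I_(ncell m) -> R) :
  mesh_ok m ->
  0 < eps -> 0 < k -> 0 < CT -> 0 < dt -> (forall l, 0 < nu l) ->
  (forall l i j, lam l i j = lam l j i) ->
  (forall l i, 0 < cn l i) -> (forall l i, 0 < cn1 l i) ->
  (forall i, 0 < Tn i) -> (forall i, 0 < Tn1 i) ->
  schemeI m eps k CT dt nu z rhof psiD g lam uhat cn cn1 psi1 Tn Tn1 ->
  let S0 := entropy m CT cn Tn in
  let S1 := entropy m CT cn1 Tn1 in
  let rhs := eps * (\sum_(l < M) dinner m
                      (fun i => nu l * cn1 l i * sqnorm (uhat l i))
                      (fun i => 1 / Tn1 i))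
             - k * (\sum_(i < ncell m) \sum_(j < ncell m | (i < j)%N && adj m i j)
                      tauint m i j * Dg m Tn1 i j * Dg m (fun q => 1 / Tn1 q) i j) in
  (S1 - S0) / dt >= rhs /\ rhs >= 0.
Proof.


Proof.
move=> [hinj [hvol [hadj [hirr [hfm [hfpos _]]]]]] heps hk hCT hdt hnu hlam hc0 hc1 hT0 hT1.
move=> [_ [_ h3]] S0 S1 rhs.
set V := vol m.
set F := fun l i j => flux m (nu l) (z l) (cn l) (cn1 l) psi1 Tn i j.
set G := fun l i => \sum_(j < ncell m | adj m i j) fmeas m i j * F l i j * lam l i j.
set Q := fun i => \sum_(j < ncell m | adj m i j) tauint m i j * Dg m Tn1 i j.
set W := fun i => \sum_(l < M) nu l * cn1 l i * sqnorm (uhat l i).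
set Y := fun i => V i * CT * ((Tn1 i - Tn i) / Tn1 i)
          - \sum_(l < M) V i * ((1 + ln (cn1 l i)) * (cn1 l i - cn l i)).
set Z := fun i => k * (Q i * (1 / Tn1 i)) + eps * \sum_(l < M) G l i
          + eps * (V i * W i * (1 / Tn1 i)).
have tauC : forall i j, tauint m i j = tauint m j i.
  by move=> i j; rewrite /tauint dintC hfm.
have stepA : \sum_(i < ncell m) Y i <= S1 - S0.
  have e1 : forall c : 'I_M -> 'I_(ncell m) -> R,
      \sum_(l < M) dinner m (c l) (lng m (c l))
      = \sum_(i < ncell m) \sum_(l < M) V i * c l i * ln (c l i).
    by move=> c; rewrite /dinner /lng; exact: exchange_big.
  rewrite /S1 /S0 /entropy !e1.
  have hT : \sum_(i < ncell m) V i * CT * ((Tn1 i - Tn i) / Tn1 i)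
      <= dinner m (fun i => ln (Tn1 i) + 1) (fun=> CT)
         - dinner m (fun i => ln (Tn i) + 1) (fun=> CT).
    rewrite /dinner -sumrB; apply: ler_sum => i _.
    have h := ln_diff (hT0 i) (hT1 i).
    have hVC : 0 < V i * CT by rewrite mulr_gt0.
    set q := (Tn1 i - Tn i) / Tn1 i in h *.
    rewrite /V in hVC *. nra.
  have hc : \sum_(i < ncell m) \sum_(l < M) V i * cn1 l i * ln (cn1 l i)
            - \sum_(i < ncell m) \sum_(l < M) V i * cn l i * ln (cn l i)
      <= \sum_(i < ncell m) \sum_(l < M) V i * ((1 + ln (cn1 l i)) * (cn1 l i - cn l i)).
    rewrite -sumrB; apply: ler_sum => i _; rewrite -sumrB; apply: ler_sum => l _.
    have h := ln_diff' (hc1 l i) (hc0 l i).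
    have hv := hvol i. rewrite /V. nra.
  have eY : \sum_(i < ncell m) Y i = \sum_(i < ncell m) V i * CT * ((Tn1 i - Tn i) / Tn1 i)
      - \sum_(i < ncell m) \sum_(l < M) V i * ((1 + ln (cn1 l i)) * (cn1 l i - cn l i)).
    by rewrite /Y sumrB.
  rewrite eY; lra.
have stepB : forall i, Y i / dt = Z i.
  move=> i; have hV := hvol i; have hT := hT1 i; have h := h3 i; rewrite /= big_split /= -mulr_sumr in h.
  set sG := \sum_(l < M) G l i.
  set sB := \sum_(l < M) (1 + ln (cn1 l i)) * ((cn1 l i - cn l i) / dt).
  have e : CT * (Tn1 i - Tn i)
      = dt * (k / V i * Q i + Tn1 i * (eps / V i * sG + sB) + eps * W i).
    transitivity (dt * (CT * ((Tn1 i - Tn i) / dt))).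
      by field; nz.
    by congr (_ * _); exact: h.
  rewrite /Y /Z -/sG.
  have -> : \sum_(l < M) V i * ((1 + ln (cn1 l i)) * (cn1 l i - cn l i))
            = V i * dt * sB.
    rewrite /sB mulr_sumr; apply: eq_bigr => l _; field; nz.
  have -> : V i * CT * ((Tn1 i - Tn i) / Tn1 i) = V i / Tn1 i * (CT * (Tn1 i - Tn i)).
    by field; nz.
  rewrite e; set qq := Q i; set ww := W i; set vv := V i.
  by field; nz.
have stepC : \sum_(i < ncell m) Z i = rhs.
  rewrite /Z !big_split /=.
  have hG : \sum_(i < ncell m) eps * \sum_(l < M) G l i = 0.
    rewrite -mulr_sumr exchange_big big1 ?mulr0 // => l _.
    rewrite /G (sym_sum (a := adj m) _ hadj hirr).
    apply: big1 => i _; apply: big1 => j _.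
    rewrite /F fluxC (hlam l j i) (hfm j i); ring.
  have hW : \sum_(i < ncell m) eps * (V i * W i * (1 / Tn1 i))
      = eps * \sum_(l < M) dinner m (fun i => nu l * cn1 l i * sqnorm (uhat l i))
                      (fun i => 1 / Tn1 i).
    rewrite -mulr_sumr; congr (_ * _); rewrite /dinner [RHS]exchange_big.
    apply: eq_bigr => i _; rewrite /W mulr_sumr mulr_suml; apply: eq_bigr => l _.
    rewrite /V; ring.
  have hQ : \sum_(i < ncell m) k * (Q i * (1 / Tn1 i))
      = - (k * \sum_(i < ncell m) \sum_(j < ncell m | (i < j)%N && adj m i j)
              tauint m i j * Dg m Tn1 i j * Dg m (fun q => 1 / Tn1 q) i j).
    rewrite -mulr_sumr -mulrN; congr (_ * _).
    under eq_bigr => i _ do rewrite /Q mulr_suml.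
    rewrite (sym_sum (a := adj m) _ hadj hirr) -sumrN.
    apply: eq_bigr => i _; rewrite -sumrN; apply: eq_bigr => j _.
    rewrite (tauC j i) /Dg; ring.
  by rewrite hQ hG hW /rhs; ring.
have rhs0 : 0 <= rhs.
  have h1 : 0 <= \sum_(l < M) dinner m (fun i => nu l * cn1 l i * sqnorm (uhat l i))
                      (fun i => 1 / Tn1 i).
    apply: sumr_ge0 => l _; apply: sumr_ge0 => i _.
    have hs : 0 <= sqnorm (uhat l i).
      by rewrite /sqnorm; apply: sumr_ge0 => q _; apply: sqr_ge0.
    have := hvol i; have := hnu l; have := hc1 l i; have := hT1 i.
    move=> a b c e.
    apply: mulr_ge0; last by rewrite divr_ge0 // ltW.
    apply: mulr_ge0; first exact: ltW.
    by apply: mulr_ge0 => //; apply: mulr_ge0; apply: ltW.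
  have h2 : \sum_(i < ncell m) \sum_(j < ncell m | (i < j)%N && adj m i j)
                      tauint m i j * Dg m Tn1 i j * Dg m (fun q => 1 / Tn1 q) i j <= 0.
    apply: sumr_le0 => i _; apply: sumr_le0 => j /andP[_ hij].
    rewrite -mulrA; apply: mulr_ge0_le0.
      rewrite /tauint divr_ge0 //; first exact: ltW (hfpos _ _ hij).
      by rewrite /dint /eucl; apply: sqrtr_ge0.
    have a := hT1 i; have b := hT1 j.
    have -> : Dg m Tn1 i j * Dg m (fun q => 1 / Tn1 q) i j
              = - ((Tn1 j - Tn1 i) ^+ 2 / (Tn1 i * Tn1 j)).
      by rewrite /Dg; field; rewrite !gt_eqF.
    by rewrite oppr_le0 divr_ge0 ?sqr_ge0 // ltW // mulr_gt0.
  rewrite /rhs; nra.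
split => //.
rewrite -stepC.
have -> : \sum_(i < ncell m) Z i = (\sum_(i < ncell m) Y i) / dt.
  by rewrite mulr_suml; apply: eq_bigr => i _; rewrite stepB.
by apply: ler_wpM2r => //; rewrite invr_ge0 ltW.
Qed.
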